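(* Suppose the jobs are indexed so that $e_1\ge e_2\ge\dots\ge e_n$, where $e_j=w_j/p_j$. Let $\sigma$ be a proper schedule and $\sigma'$ the intermediate schedule obtained from $\sigma$ by an admissible swap at some step $j^*$ between machines $M_h$ and $M_i$. Then $\sum_j w_jC_j(\sigma')\le\sum_j w_jC_j(\sigma)$.
   Context: Jobs $J=\{1,\dots,n\}$, job $j$ with positive integer processing time $p_j$ and nonnegative integer weight $w_j$, are scheduled non-preemptively on $m$ identical machines $M_1,\dots,M_m$; $p_{\max}=\max_j p_j$, $P(X)=\sum_{j\in X}p_j$. A proper schedule $\sigma$ is a partition $J=J_1(\sigma)\cup\dots\cup J_m(\sigma)$, the jobs of $J_i(\sigma)$ processed on $M_i$ consecutively from time $0$ without idle time in increasing index order; $C_j(\sigma)$ is the completion time of $j$. $J_j=\{1,\dots,j\}$, $J_{i,j}(\sigma)=J_i(\sigma)\cap J_j$, $\Delta_{h,i,j}(\sigma)=P(J_{h,j}(\sigma))-P(J_{i,j}(\sigma))$. The swap: admissible for proper $\sigma$ at step $j^*$ with machines $M_h,M_i$ if $j^*\in J_h(\sigma)$, $|J_i(\sigma)\setminus J_{i,j^*}(\sigma)|\ge 2p_{\max}$, and $\Delta_{h,i,j^*}(\sigma)\ge 4p_{\max}^2$. Let $J_I$ be the first (smallest-index) $2p_{\max}$ jobs of $J_i(\sigma)\setminus J_{i,j^*}(\sigma)$ and $J_H$ the last (largest-index) $2p_{\max}$ jobs of $J_{h,j^*}(\sigma)$; choose non-empty $J_{H'}\subseteq J_H$, $J_{I'}\subseteq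 J_I$ with $P(J_{H'})=P(J_{I'})$. The intermediate schedule $\sigma'$: on $M_h$ the time interval occupied by $J_H$ in $\sigma$ is filled by $J_H\setminus J_{H'}$ then $J_{I'}$; on $M_i$ the interval occupied by $J_I$ is filled by $J_{H'}$ then $J_I\setminus J_{I'}$ (each group in its order in $\sigma$); all other jobs keep their positions. *)

(* Defs.v *)
From mathcomp Require Import all_boot all_order all_algebra.
Set Implicit Arguments. Unset Strict Implicit. Unset Printing Implicit Defensive.
Import Order.TTheory GRing.Theory Num.Theory.

(* Jobs are 'I_n : the job numbered k+1 in the paper is the ordinal k,
   so the index order is the order of ordinals.  Machines are 'I_m. *)

Section Sched.
Variables (n m : nat) (p w : 'I_n -> nat).

Definition pmax : nat := \max_(j : 'I_n) p j.

Definition Pseq (s : seq 'I_n) : nat := \sum_(k <- s) p k.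

Definition eratio (j : 'I_n) : rat := ((w j)%:R / (p j)%:R)%R.

(* A proper schedule is given by the assignment sigma of jobs to machines
   (i.e. the partition J = J_1 u ... u J_m); the jobs of machine i are
   processed in increasing index order. *)
Definition jobs_on (sigma : {ffun 'I_n -> 'I_m}) (i : 'I_m) : seq 'I_n :=
  [seq j <- enum 'I_n | sigma j == i].

(* A general (not necessarily proper) schedule: assignment a and, for each
   machine, the sequence of its jobs processed consecutively from time 0
   without idle time. *)
Definition compl (a : 'I_n -> 'I_m) (seqs : 'I_m -> seq 'I_n) (j : 'I_n) : nat :=
  Pseq (take (index j (seqs (a j))).+1 (seqs (a j))).

Definition C (sigma : {ffun 'I_n -> 'I_m}) (j : 'I_n) : nat :=
  compl sigma (jobs_on sigma) j.

Definition wsum (a : 'I_n -> 'I_m) (seqs : 'I_m -> seq 'I_n) : nat :=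
  \sum_(j : 'I_n) w j * compl a seqs j.

Section Swap.
Variables (sigma : {ffun 'I_n -> 'I_m}) (jstar : 'I_n) (h i : 'I_m).

Definition before (k : 'I_m) : seq 'I_n := [seq j : 'I_n <- jobs_on sigma k | (j <= jstar)%N].
Definition after (k : 'I_m) : seq 'I_n := [seq j : 'I_n <- jobs_on sigma k | (jstar < j)%N].

Definition JI : seq 'I_n := take (2 * pmax) (after i).
Definition JH : seq 'I_n := drop (size (before h) - 2 * pmax) (before h).

Definition admissible : Prop :=
  [/\ sigma jstar = h,
      2 * pmax <= size (after i) &
      Pseq (before i) + 4 * pmax ^ 2 <= Pseq (before h)]%N.

Definition valid_choice (H' I' : {set 'I_n}) : Prop :=
  [/\ H' \subset [set x | x \in JH], I' \subset [set x | x \in JI],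
      H' != set0, I' != set0 &
      Pseq (enum H') = Pseq (enum I')].

Definition swap_assign (H' I' : {set 'I_n}) (j : 'I_n) : 'I_m :=
  if j \in H' then i else if j \in I' then h else sigma j.

Definition swap_seqs (H' I' : {set 'I_n}) (k : 'I_m) : seq 'I_n :=
  if k == h then
    take (size (before h) - 2 * pmax) (before h)
      ++ [seq j <- JH | j \notin H'] ++ [seq j <- JI | j \in I'] ++ after h
  else if k == i then
    before i ++ [seq j <- JH | j \in H'] ++ [seq j <- JI | j \notin I']
      ++ drop (2 * pmax) (after i)
  else jobs_on sigma k.

End Swap.
End Sched.

(* Main.v *)
Require Import Defs.
From mathcomp Require Import all_boot all_order all_algebra.
From mathcomp Require Import ring lra zify.
Set Implicit Arguments. Unset Strict Implicit. Unset Printing Implicit Defensive.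
Import Order.TTheory GRing.Theory Num.Theory.

Local Open Scope ring_scope.

Section Alg.
Variables (n : nat) (p : 'I_n -> nat).
Definition pr (x : 'I_n) : rat := (p x)%:R.
Definition Ds (f : 'I_n -> rat) (s : seq 'I_n) : rat := \sum_(k <- s) f k.
Definition Ps s := Ds pr s.
Definition Qs s := Ds (fun x => pr x * pr x) s.
Fixpoint Gf (f : 'I_n -> rat) (a : pred 'I_n) (s : seq 'I_n) : rat :=
  match s with
  | [::] => 0
  | x :: s' => (if a x then f x * pr x else 0) + pr x * Ds f (filter a s') + Gf f a s'
  end.
Definition G f s := Gf f predT s.

Lemma Ds_cons f x s : Ds f (x :: s) = f x + Ds f s.
Proof. by rewrite /Ds big_cons. Qed.
Lemma Ds_nil f : Ds f [::] = 0.
Proof. by rewrite /Ds big_nil. Qed.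
Lemma Ds_cat f s1 s2 : Ds f (s1 ++ s2) = Ds f s1 + Ds f s2.
Proof. by rewrite /Ds big_cat. Qed.
Lemma Ds_split f a s : Ds f (filter a s) + Ds f (filter (predC a) s) = Ds f s.
Proof. by rewrite /Ds !big_filter [in RHS](bigID a). Qed.

Lemma G_nil f : G f [::] = 0. Proof. by []. Qed.
Lemma G_cons f x s : G f (x :: s) = f x * pr x + pr x * Ds f s + G f s.
Proof. by rewrite /G /= filter_predT. Qed.

Lemma G_cat f s1 s2 : G f (s1 ++ s2) = G f s1 + G f s2 + Ps s1 * Ds f s2.
Proof.
elim: s1 => [|x s IH]; first by rewrite /Ps Ds_nil G_nil; ring.
rewrite cat_cons !G_cons IH Ds_cat /Ps Ds_cons -/(Ps s); ring.
Qed.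

Lemma Gf_lin c f g a s :
  Gf (fun x => c * f x + g x) a s = c * Gf f a s + Gf g a s.
Proof.
elim: s => [|x s IH] /=; first by ring.
rewrite IH; have -> : Ds (fun x => c * f x + g x) (filter a s)
  = c * Ds f (filter a s) + Ds g (filter a s).
  by rewrite /Ds big_split /= mulr_sumr.
case: (a x); ring.
Qed.

Lemma Gf_ext f g a s : (forall x, f x = g x) -> Gf f a s = Gf g a s.
Proof.
move=> E; elim: s => [|x s IH] //=.
rewrite IH E; congr (_ + _ + _); congr (_ * _); rewrite /Ds; apply: eq_bigr => *; exact: E.
Qed.

Lemma Gf_split f a s : Gf f a s + Gf f (predC a) s = G f s.
Proof.
elim: s => [|x s IH]; first by rewrite G_nil /= addr0.
rewrite G_cons -IH -(Ds_split f a s) /=.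
case: (a x) => /=; ring.
Qed.

Lemma G_p s : 2 * G pr s = Ps s ^+ 2 + Qs s.
Proof.
elim: s => [|x s IH]; first by rewrite G_nil /Ps /Qs !Ds_nil; ring.
rewrite G_cons /Ps /Qs !Ds_cons -/(Ps s) -/(Qs s).
have -> : 2 * (pr x * pr x + pr x * Ds pr s + G pr s)
  = 2 * (pr x * pr x + pr x * Ds pr s) + 2 * G pr s by ring.
rewrite IH /Ps; ring.
Qed.

Lemma Ds_ge0 f s : {in s, forall x, 0 <= f x} -> 0 <= Ds f s.
Proof. move=> H; rewrite /Ds big_seq; apply: sumr_ge0 => x /H //. Qed.
Lemma Ds_le0 f s : {in s, forall x, f x <= 0} -> Ds f s <= 0.
Proof.
move=> H; rewrite /Ds big_seq -oppr_ge0 -sumrN; apply: sumr_ge0 => x /H.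
by rewrite oppr_ge0.
Qed.
Lemma Ps_ge0 s : 0 <= Ps s.
Proof. by apply: Ds_ge0 => x _; rewrite /pr ler0n. Qed.
Lemma Ds_filter_le f a s : {in s, forall x, 0 <= f x} -> Ds f (filter a s) <= Ds f s.
Proof.
move=> H; rewrite -(Ds_split f a s) lerDl; apply: Ds_ge0 => x.
rewrite mem_filter => /andP[_]; exact: H.
Qed.

Lemma L3 f a s : {in s, forall x, 0 <= f x} -> G f (filter a s) <= Gf f a s.
Proof.
elim: s => [|x s IH] H //=.
have Hs : {in s, forall x, 0 <= f x} by move=> y ys; apply: H; rewrite inE ys orbT.
have Hx : 0 <= f x by apply: H; rewrite inE eqxx.
have := IH Hs; have : 0 <= Ds f (filter a s).
  by apply: Ds_ge0 => y; rewrite mem_filter => /andP[_ /Hs].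
have : 0 <= pr x by rewrite /pr ler0n.
case: (a x); rewrite ?G_cons /=; nra.
Qed.

Lemma L4 f a s : {in s, forall x, f x <= 0} ->
  G f (filter a s) + Ps (filter (predC a) s) * Ds f (filter a s) <= Gf f a s.
Proof.
elim: s => [|x s IH] H /=; first by rewrite G_nil /Ps Ds_nil; lra.
have Hs : {in s, forall x, f x <= 0} by move=> y ys; apply: H; rewrite inE ys orbT.
have Hx : f x <= 0 by apply: H; rewrite inE eqxx.
have := IH Hs; have := Ps_ge0 (filter (predC a) s).
have : 0 <= pr x by rewrite /pr ler0n.
case: (a x); rewrite /= ?G_cons /Ps ?Ds_cons -/(Ps _) ?Ds_cons; nra.
Qed.

Lemma L1a f s : {in s, forall x, f x <= 0} -> G f s <= 0.
Proof.
elim: s => [|x s IH] H; first by rewrite G_nil.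
have Hs : {in s, forall x, f x <= 0} by move=> y ys; apply: H; rewrite inE ys orbT.
have Hx : f x <= 0 by apply: H; rewrite inE eqxx.
have := IH Hs; have := Ds_le0 Hs.
have : 0 <= pr x by rewrite /pr ler0n.
rewrite G_cons; nra.
Qed.

Lemma L1b f a s : {in s, forall x, f x <= 0} -> Ps s * Ds f (filter a s) <= Gf f a s.
Proof.
elim: s => [|x s IH] H /=; first by rewrite /Ps Ds_nil; lra.
have Hs : {in s, forall x, f x <= 0} by move=> y ys; apply: H; rewrite inE ys orbT.
have Hx : f x <= 0 by apply: H; rewrite inE eqxx.
have := IH Hs; have := Ps_ge0 s.
have : 0 <= pr x by rewrite /pr ler0n.
case: (a x); rewrite /= /Ps ?Ds_cons -/(Ps _); nra.
Qed.

Lemma L2a f s : {in s, forall x, 0 <= f x} -> G f s <= Ps s * Ds f s.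
Proof.
elim: s => [|x s IH] H; first by rewrite G_nil /Ps Ds_nil; lra.
have Hs : {in s, forall x, 0 <= f x} by move=> y ys; apply: H; rewrite inE ys orbT.
have Hx : 0 <= f x by apply: H; rewrite inE eqxx.
have := IH Hs; have := Ds_ge0 Hs; have := Ps_ge0 s.
have : 0 <= pr x by rewrite /pr ler0n.
rewrite G_cons /Ps !Ds_cons -/(Ps _); nra.
Qed.

Lemma L2b f a s : {in s, forall x, 0 <= f x} -> 0 <= Gf f a s.
Proof.
elim: s => [|x s IH] H //=.
have Hs : {in s, forall x, 0 <= f x} by move=> y ys; apply: H; rewrite inE ys orbT.
have Hx : 0 <= f x by apply: H; rewrite inE eqxx.
have := IH Hs; have : 0 <= Ds f (filter a s).
  by apply: Ds_ge0 => y; rewrite mem_filter => /andP[_ /Hs].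
have : 0 <= pr x by rewrite /pr ler0n.
case: (a x); nra.
Qed.


Lemma G3 f A M B : G f (A ++ M ++ B) =
  G f A + (G f M + Ps A * Ds f M) + G f B + (Ps A + Ps M) * Ds f B.
Proof. rewrite !G_cat !Ds_cat; ring. Qed.

Lemma Gw wr d r s : (forall x, wr x = r * pr x + d x) ->
  G wr s = r * G pr s + G d s.
Proof. by move=> E; rewrite /G -Gf_lin; apply: Gf_ext. Qed.

Lemma Dw wr d r s : (forall x, wr x = r * pr x + d x) ->
  Ds wr s = r * Ps s + Ds d s.
Proof. by move=> E; rewrite /Ps /Ds mulr_sumr -big_split; apply: eq_bigr. Qed.

Lemma core (wr d : 'I_n -> rat) r (A JH B Bi JI Dd : seq 'I_n) (a b : pred 'I_n) :
  (forall x, wr x = r * pr x + d x) ->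
  {in JH, forall x, 0 <= d x} -> {in JI, forall x, d x <= 0} ->
  Ps Bi + Ps JI <= Ps A -> Ps Bi + Ps (filter a JH) <= Ps A ->
  Ps (filter a JH) = Ps (filter b JI) ->
  G wr (A ++ [seq x <- JH | ~~ a x] ++ [seq x <- JI | b x] ++ B)
  + G wr (Bi ++ [seq x <- JH | a x] ++ [seq x <- JI | ~~ b x] ++ Dd)
  <= G wr (A ++ JH ++ B) + G wr (Bi ++ JI ++ Dd).
Proof.
move=> Ew dH dI h1 h2 h3.
have -> : [seq x <- JH | ~~ a x] = filter (predC a) JH by [].
have -> : [seq x <- JI | ~~ b x] = filter (predC b) JI by [].
set X1 := filter (predC a) JH; set X2 := filter a JH.
set Y1 := filter b JI; set Y2 := filter (predC b) JI.
have {}h3 : Ps X2 = Ps Y1 by [].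
have {}h2 : Ps Bi + Ps X2 <= Ps A by [].
rewrite [X1 ++ _ ++ B]catA [X2 ++ _ ++ Dd]catA !G3.
have PM1 : Ps (X1 ++ Y1) = Ps JH.
  by rewrite /Ps Ds_cat; move: h3; rewrite /Ps => <-; rewrite addrC Ds_split.
have PM2 : Ps (X2 ++ Y2) = Ps JI.
  by rewrite /Ps Ds_cat; move: h3; rewrite /Ps => ->; rewrite Ds_split.
rewrite PM1 PM2.
suff : G wr (X1 ++ Y1) + Ps A * Ds wr (X1 ++ Y1) + (G wr (X2 ++ Y2) + Ps Bi * Ds wr (X2 ++ Y2))
  <= G wr JH + Ps A * Ds wr JH + (G wr JI + Ps Bi * Ds wr JI) by lra.
rewrite !(Gw _ Ew) !(Dw _ Ew).
have Ep : G pr (X1 ++ Y1) + Ps A * Ps (X1 ++ Y1) + (G pr (X2 ++ Y2) + Ps Bi * Ps (X2 ++ Y2))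
  = G pr JH + Ps A * Ps JH + (G pr JI + Ps Bi * Ps JI).
  rewrite PM1 PM2.
  suff : 2 * G pr (X1 ++ Y1) + 2 * G pr (X2 ++ Y2) = 2 * G pr JH + 2 * G pr JI by lra.
  rewrite !G_p PM1 PM2.
  have : Qs X1 + Qs X2 = Qs JH by rewrite addrC /Qs Ds_split.
  have : Qs Y1 + Qs Y2 = Qs JI by rewrite /Qs Ds_split.
  rewrite /Qs !Ds_cat; lra.
suff Ed : G d (X1 ++ Y1) + Ps A * Ds d (X1 ++ Y1) + (G d (X2 ++ Y2) + Ps Bi * Ds d (X2 ++ Y2))
  <= G d JH + Ps A * Ds d JH + (G d JI + Ps Bi * Ds d JI).
  set u1 := G pr (X1 ++ Y1); set u2 := G pr (X2 ++ Y2); set u3 := G pr JH; set u4 := G pr JI.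
  move: Ep Ed; rewrite PM1 PM2.
  set v1 := Ps JH; set v2 := Ps JI; set SA := Ps A; set SB := Ps Bi.
  move=> Ep Ed.
  have -> : r * u1 + G d (X1 ++ Y1) + SA * (r * v1 + Ds d (X1 ++ Y1)) +
    (r * u2 + G d (X2 ++ Y2) + SB * (r * v2 + Ds d (X2 ++ Y2)))
    = r * (u1 + SA * v1 + (u2 + SB * v2)) + (G d (X1 ++ Y1) + SA * Ds d (X1 ++ Y1) + (G d (X2 ++ Y2) + SB * Ds d (X2 ++ Y2))) by ring.
  rewrite Ep.
  have -> : r * u3 + G d JH + SA * (r * v1 + Ds d JH) + (r * u4 + G d JI + SB * (r * v2 + Ds d JI))
    = r * (u3 + SA * v1 + (u4 + SB * v2)) + (G d JH + SA * Ds d JH + (G d JI + SB * Ds d JI)) by ring.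
  by rewrite lerD2l.
rewrite !G_cat !Ds_cat -(Gf_split d a JH) -(Gf_split d b JI).
rewrite -(Ds_split d a JH) -(Ds_split d b JI) -/X1 -/X2 -/Y1 -/Y2.
have dX1 : {in X1, forall x, 0 <= d x} by move=> x; rewrite mem_filter => /andP[_ /dH].
have dX2 : {in X2, forall x, 0 <= d x} by move=> x; rewrite mem_filter => /andP[_ /dH].
have dY1 : {in Y1, forall x, d x <= 0} by move=> x; rewrite mem_filter => /andP[_ /dI].
have dY2 : {in Y2, forall x, d x <= 0} by move=> x; rewrite mem_filter => /andP[_ /dI].
have i3 : G d X1 <= Gf d (predC a) JH by apply: L3.
have i4 : G d Y2 + Ps Y1 * Ds d Y2 <= Gf d (predC b) JI.
  have := L4 (predC b) dI; rewrite -/Y2.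
  by have -> : filter (predC (predC b)) JI = Y1 by apply: eq_filter => x /=; rewrite negbK.
have i1a := L1a dY1.
have i1b : Ps JI * Ds d Y1 <= Gf d b JI by apply: L1b.
have i2a := L2a dX2.
have i2b : 0 <= Gf d a JH by apply: L2b.
have hY1 := Ds_le0 dY1. have hX2 := Ds_ge0 dX2.
have hPX1 := Ps_ge0 X1. have hPJI := Ps_ge0 JI.
nra.
Qed.

End Alg.

Local Close Scope ring_scope.

Lemma count_mem_filter (T : eqType) (P : pred T) (j : T) s :
  count_mem j (filter P s) = (P j * count_mem j s)%N.
Proof.
elim: s => [|x s IH] /=; first by rewrite muln0.
case Px: (P x) => /=; rewrite IH; case: (eqVneq x j) => [<-|ne]; rewrite ?Px ?eqxx ?(negbTE ne) /=; lia.
Qed.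

Lemma mem_count_pos (T : eqType) (x : T) s : (x \in s) = (0 < count_mem x s)%N.
Proof. by rewrite -has_pred1 has_count. Qed.

Local Open Scope ring_scope.

Lemma Gidx n (p : 'I_n -> nat) f s : uniq s ->
  G p f s = \sum_(j <- s) f j * Ps p (take (index j s).+1 s).
Proof.
elim: s => [|x s IH]; first by rewrite big_nil.
move=> /andP[xs us]; rewrite G_cons big_cons /= eqxx take0 (IH us).
have E : \sum_(j <- s) f j * Ps p (x :: take (if x == j then 0%N else (index j s).+1) s)
   = \sum_(j <- s) (f j * pr p x + f j * Ps p (take (index j s).+1 s)).
  apply: eq_big_seq => j js.
  have -> : (x == j) = false by apply/negbTE; apply: contra xs => /eqP ->.
  by rewrite /= /Ps Ds_cons mulrDr.
rewrite E big_split /= -mulr_suml /Ps Ds_cons Ds_nil /Ds addr0; ring.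
Qed.

Lemma wsum_G n m (p w : 'I_n -> nat) (a : 'I_n -> 'I_m) (seqs : 'I_m -> seq 'I_n) :
  (forall j k, count_mem j (seqs k) = (a j == k)) ->
  (wsum p w a seqs)%:R = \sum_k G p (fun j => (w j)%:R) (seqs k) :> rat.
Proof.
move=> Hc.
have us : forall k, uniq (seqs k).
  move=> k; apply: count_mem_uniq => x; rewrite Hc mem_count_pos Hc; by case: (a x == k).
rewrite /wsum natr_sum.
under eq_bigr do rewrite natrM /compl /Pseq natr_sum.
under [RHS]eq_bigr do rewrite Gidx //.
rewrite (partition_big a xpredT) //=.
apply: eq_bigr => k _.
rewrite -big_filter.
have Hp : perm_eq [seq j <- index_enum 'I_n | a j == k] (seqs k).
  apply: uniq_perm; first by rewrite filter_uniq // index_enum_uniq.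
    exact: us.
  move=> x; rewrite mem_filter mem_index_enum andbT mem_count_pos Hc; by case: (a x == k).
rewrite (perm_big _ Hp) /=.
apply: eq_big_seq => j; rewrite mem_count_pos Hc lt0b => /eqP ->.
by [].
Qed.

Local Close Scope ring_scope.

Lemma split_sorted n (t : nat) (s : seq 'I_n) :
  sorted (fun x y : 'I_n => (x < y)%N) s ->
  [seq j : 'I_n <- s | (j <= t)%N] ++ [seq j : 'I_n <- s | (t < j)%N] = s.
Proof.
elim: s => [|x s IH] //= Hp.
have Hs := path_sorted Hp.
case: (leqP x t) => hx /=.
  by rewrite IH // ltnNge hx.
have Hall : all (fun y : 'I_n => (x < y)%N) s.
  apply: (order_path_min _ Hp) => a b c; exact: ltn_trans.
rewrite (eq_in_filter (a2 := pred0)); last first.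
  move=> y ys /=; move/allP: Hall => /(_ y ys) xy; apply/negbTE; rewrite -ltnNge.
  exact: ltn_trans hx xy.
rewrite filter_pred0 /=; congr (_ :: _); apply/all_filterP.
apply/allP => y ys; move/allP: Hall => /(_ y ys) xy; exact: ltn_trans hx xy.
Qed.

Lemma sorted_jobs n m (sigma : {ffun 'I_n -> 'I_m}) k :
  sorted (fun x y : 'I_n => (x < y)%N) (jobs_on sigma k).
Proof.
apply: sorted_filter; first by move=> a b c; exact: ltn_trans.
have := iota_ltn_sorted 0 n; rewrite -val_enum_ord sorted_map.
by [].
Qed.

Lemma jobs_split n m (sigma : {ffun 'I_n -> 'I_m}) jstar k :
  before sigma jstar k ++ after sigma jstar k = jobs_on sigma k.
Proof. exact: split_sorted (sorted_jobs sigma k). Qed.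

Lemma count_jobs n m (sigma : {ffun 'I_n -> 'I_m}) j k :
  count_mem j (jobs_on sigma k) = (sigma j == k).
Proof.
rewrite /jobs_on count_mem_filter count_uniq_mem ?enum_uniq // mem_enum.
by rewrite muln1.
Qed.

Lemma uniq_jobs n m (sigma : {ffun 'I_n -> 'I_m}) k : uniq (jobs_on sigma k).
Proof. by rewrite filter_uniq // enum_uniq. Qed.

Lemma Pseq_bound n (p : 'I_n -> nat) s : (Pseq p s <= size s * pmax p)%N.
Proof.
elim: s => [|x s IH]; first by rewrite /Pseq big_nil.
rewrite /Pseq big_cons /= mulSn; apply: leq_add => //; exact: leq_bigmax.
Qed.

Lemma PsE n (p : 'I_n -> nat) s : Ps p s = ((Pseq p s)%:R)%R.
Proof. by rewrite /Ps /Ds /Pseq natr_sum. Qed.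

Ltac neqs := repeat match goal with
 | H : is_true (?a != ?b) |- _ => move/negbTE: H => H
 | H : (?a == ?b) = false |- context[?a == ?b] => rewrite H
 | H : (?a == ?b) = false |- context[?b == ?a] => rewrite (eq_sym b a) H
 end.

Unset Implicit Arguments.

Theorem lemma5 (n m : nat) (p w : 'I_n -> nat)
  (p_pos : forall j : 'I_n, (0 < p j)%N)
  (e_sorted : forall j k : 'I_n, (j <= k)%N -> (eratio p w k <= eratio p w j)%R)
  (sigma : {ffun 'I_n -> 'I_m}) (jstar : 'I_n) (h i : 'I_m)
  (H' I' : {set 'I_n}) :
  admissible p sigma jstar h i ->
  valid_choice p sigma jstar h i H' I' ->
  (wsum p w (swap_assign sigma h i H' I') (swap_seqs p sigma jstar h i H' I')
   <= wsum p w sigma (jobs_on sigma))%N.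
Proof.
move=> [Hsh Hsz HP] [HsubH HsubI HH0 HI0 HPeq].
have pmax_ge : forall j, (p j <= pmax p)%N by move=> j; exact: leq_bigmax.
have pm1 : (0 < pmax p)%N by apply: leq_trans (p_pos jstar) (pmax_ge jstar).
have hi : h != i.
  apply/eqP => E; move: HP; rewrite E; nia.
set bh := before sigma jstar h.
set A := take (size bh - 2 * pmax p) bh.
set JHs := JH p sigma jstar h.
set JIs := JI p sigma jstar i.
set Dd := drop (2 * pmax p) (after sigma jstar i).
have Eh : jobs_on sigma h = A ++ JHs ++ after sigma jstar h.
  by rewrite catA cat_take_drop jobs_split.
have Ei : jobs_on sigma i = before sigma jstar i ++ JIs ++ Dd.
  by rewrite /JIs /JI cat_take_drop jobs_split.
have uJH : uniq JHs by rewrite drop_uniq // filter_uniq // uniq_jobs.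
have uJI : uniq JIs by rewrite take_uniq // filter_uniq // uniq_jobs.
have JHsub : forall j, j \in H' -> j \in JHs.
  by move=> j /(subsetP HsubH); rewrite inE.
have JIsub : forall j, j \in I' -> j \in JIs.
  by move=> j /(subsetP HsubI); rewrite inE.
have newc : forall j k, count_mem j (swap_seqs p sigma jstar h i H' I' k)
    = (swap_assign sigma h i H' I' j == k).
  move=> j k.
  have cH := count_jobs sigma j h; rewrite Eh !count_cat in cH.
  have cI := count_jobs sigma j i; rewrite Ei !count_cat in cI.
  have cK := count_jobs sigma j k.
  have hH : ((j \in H') <= count_mem j JHs)%N.
    case hj: (j \in H') => //; by rewrite -mem_count_pos JHsub.
  have hI : ((j \in I') <= count_mem j JIs)%N.
    case hj: (j \in I') => //; by rewrite -mem_count_pos JIsub.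
  have cX1 : count_mem j [seq x <- JHs | x \notin H'] = ((j \notin H') * count_mem j JHs)%N
    by rewrite count_mem_filter.
  have cX2 : count_mem j [seq x <- JHs | x \in H'] = ((j \in H') * count_mem j JHs)%N
    by rewrite count_mem_filter.
  have cY1 : count_mem j [seq x <- JIs | x \in I'] = ((j \in I') * count_mem j JIs)%N
    by rewrite count_mem_filter.
  have cY2 : count_mem j [seq x <- JIs | x \notin I'] = ((j \notin I') * count_mem j JIs)%N
    by rewrite count_mem_filter.
  rewrite /swap_seqs /swap_assign.
  move: cH cI cK hH hI.
  case: (eqVneq (sigma j) h) => [Es|nh];
    [rewrite Es
    |case: (eqVneq (sigma j) i) => [Es|ni]; [rewrite Es|]];
  (case: (eqVneq k h) => [Ek|nkh]; [subst k| case: (eqVneq k i) => [Ek|nki]; [subst k|]]);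
  rewrite -/bh -/A -/JHs -/JIs -/Dd ?count_cat ?cX1 ?cX2 ?cY1 ?cY2;
  case: (j \in H'); case: (j \in I'); rewrite /= ?eqxx; neqs; rewrite /=; clear; lia.
have oldc : forall j k, count_mem j (jobs_on sigma k) = (sigma j == k).
  by move=> j k; exact: count_jobs.
rewrite -(ler_nat rat) (wsum_G p w newc) (wsum_G p w oldc).
have ih : i != h by rewrite eq_sym.
have split : forall F : 'I_m -> rat,
    (\sum_k F k = F h + F i + \sum_(k | (k != h) && (k != i)) F k)%R.
  by move=> F; rewrite (bigD1 h) //= (bigD1 i) //= addrA.
rewrite !split.
have Eo : (\sum_(k | (k != h) && (k != i)) G p (fun j => (w j)%:R) (swap_seqs p sigma jstar h i H' I' k)
    = \sum_(k | (k != h) && (k != i)) G p (fun j => (w j)%:R) (jobs_on sigma k))%R.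
  by apply: eq_bigr => k /andP[kh ki]; rewrite /swap_seqs (negbTE kh) (negbTE ki).
rewrite Eo lerD2r.
rewrite /swap_seqs eqxx (negbTE ih) eqxx -/bh -/A -/JHs -/JIs -/Dd Eh Ei.
set r := eratio p w jstar.
pose d := fun x => ((eratio p w x - r) * pr p x)%R.
have sJH : (size JHs <= 2 * pmax p)%N by rewrite /JHs /JH size_drop; lia.
have sJI : (size JIs <= 2 * pmax p)%N by rewrite /JIs /JI size_take; case: ifP; lia.
have PJH : (Pseq p JHs <= 2 * pmax p * pmax p)%N.
  exact: leq_trans (Pseq_bound p JHs) (leq_mul sJH (leqnn _)).
have PJI : (Pseq p JIs <= 2 * pmax p * pmax p)%N.
  exact: leq_trans (Pseq_bound p JIs) (leq_mul sJI (leqnn _)).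
have PA : (Pseq p A + Pseq p JHs = Pseq p bh)%N.
  by rewrite /Pseq -big_cat cat_take_drop.
move: HP; rewrite -mulnn -/bh => HP.
have n1 : (Pseq p (before sigma jstar i) + Pseq p JIs <= Pseq p A)%N by lia.
have n2 : (Pseq p (before sigma jstar i) + Pseq p JHs <= Pseq p A)%N by lia.
apply: (@core n p _ d r _ _ _ _ _ _ (fun x => x \in H') (fun x => x \in I')).
- move=> x; rewrite /d /pr mulrBl addrC subrK /eratio divfK //.
  by rewrite pnatr_eq0 -lt0n p_pos.
- move=> x xJ.
  have : (x <= jstar)%N.
    by move: xJ; rewrite /JHs /JH => /mem_drop; rewrite mem_filter => /andP[].
  move=> /e_sorted ex; rewrite /d mulr_ge0 // ?subr_ge0 // /pr ler0n //.
- move=> x xJ.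
  have : (jstar <= x)%N.
    move: xJ; rewrite /JIs /JI => /mem_take; rewrite mem_filter => /andP[/ltnW] //.
  move=> /e_sorted ex; rewrite /d.
  have : (0 <= pr p x)%R by rewrite /pr ler0n.
  move: ex; rewrite -/r; nra.
- move: n1; rewrite -(ler_nat rat) natrD -!PsE //.
- have := @Ds_filter_le n (pr p) (fun x => x \in H') JHs.
  move=> /(_ (fun x _ => ler0n _ _)) hf.
  move: n2; rewrite -(ler_nat rat) natrD -!PsE.
  move: hf; rewrite /Ps; lra.
- have pe1 : perm_eq [seq x <- JHs | x \in H'] (enum H').
    apply: uniq_perm; [by rewrite filter_uniq | exact: enum_uniq |].
    move=> x; rewrite mem_filter mem_enum; apply/andP/idP => [[]//|xH]; split=> //.
    exact: JHsub.
  have pe2 : perm_eq [seq x <- JIs | x \in I'] (enum I').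
    apply: uniq_perm; [by rewrite filter_uniq | exact: enum_uniq |].
    move=> x; rewrite mem_filter mem_enum; apply/andP/idP => [[]//|xI]; split=> //.
    exact: JIsub.
  rewrite !PsE /Pseq (perm_big _ pe1) (perm_big _ pe2).
  by move: HPeq; rewrite /Pseq => ->.
Qed.
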